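(* Let $1\le p<\infty$ and $\rho(t)=e^{-t^2-\epsilon pt}$, and let $\mu$ be the associated measure on $X$. Then there exists $u\in N^{1,p}(X)$ such that the trace $\widetilde u$ exists (indeed $\widetilde u\equiv0$ on $Z$) but the trace $\mathscr Tu$ does not exist.
   Context: Standing setting. $(Z,d_Z,\nu)$ is a compact metric space with $0<\operatorname{diam}Z<1$, and $\nu$ is a doubling Borel measure. Fix $\alpha,\tau>1$ and $z_0\in Z$. Let $A_0=\{z_0\}$ and, for $n\ge1$, let $A_n\subset Z$ be a maximal $\alpha^{-n}$-separated set, chosen so that $A_n\subset A_m$ whenever $m>n\ge0$. Put $V_n=\{(x,n):x\in A_n\}$, $V=\bigcup_nV_n$, root $v_0=(z_0,0)$, $B_v=\mathbb B_Z(x,\alpha^{-n})$ for $v=(x,n)$. Two distinct vertices $(x,n),(y,m)$ are joined by an edge iff $|n-m|\le1$ and $\mathbb B_Z(x,\tau^{1-|n-m|}\alpha^{-n})\cap\mathbb B_Z(y,\tau^{1-|n-m|}\alpha^{-m})\neq\emptyset$. $X$ is this graph as a metric graph with unit-length edges; $|x|$ is the graph distance from $x$ to $v_0$, $d|x|$ is length measure on edges. Let $\epsilon=\log\alpha$, $d(y,z)=\inf_\gamma\int_\gamma e^{-\epsilon|x|}d|x|$, $ds=e^{-\epsilon|x|}d|x|$. Given a Borel $\rho:[0,\infty)\to(0,\infty)$, $\rho\in L^1_{\rm loc}$, $d\mu(x)=\rho(|x|)(\nu(B_{v_1})+\nu(B_{v_2}))\,d|x|$ for $x$ interior to the edge $[v_1,v_2]$.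 The boundary of $(X,d)$ is identified with $Z$. For $\xi\in Z$, $A_n(\xi)=A_n\cap\mathbb B_Z(\xi,\alpha^{-n})$, $V_n(\xi)=\{(x,n):x\in A_n(\xi)\}$; a geodesic ray $[v_0,\xi)=\bigcup_{n\ge0}[v_n(\xi),v_{n+1}(\xi)]$ with $v_n(\xi)\in V_n(\xi)$. $\mathscr Tu$ exists if for $\nu$-a.e. $\xi$ the limit of $u(x)$ as $x\to\xi$ along $[v_0,\xi)$ exists for every geodesic ray and is ray-independent. $\widetilde u$ exists if $\lim_n u_n(\xi)$ exists for $\nu$-a.e. $\xi$, where $u_n(\xi)=\frac1{\#A_n(\xi)}\sum_{z\in A_n(\xi)}u((z,n))$. Upper gradients: Borel $g\ge0$ with $|u(x)-u(y)|\le\int_\gamma g\,ds$ for each nonconstant compact rectifiable curve $\gamma$ with endpoints $x,y$. $N^{1,p}(X)$: $u\in L^p(X,\mu)$ with an upper gradient in $L^p(X,\mu)$, norm $\|u\|_{L^p}+\inf_g\|g\|_{L^p}$. *)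

(* Defs.v *)
From HB Require Import structures.
From mathcomp Require Import all_boot all_order all_algebra.
From mathcomp Require Import all_classical all_reals all_analysis.
From mathcomp Require Import measurable_realfun.
Import Order.TTheory GRing.Theory Num.Theory.
Import numFieldNormedType.Exports.

Set Implicit Arguments.
Unset Strict Implicit.
Unset Printing Implicit Defensive.

Local Open Scope classical_set_scope.
Local Open Scope ring_scope.

Section MetricZ.
Context {R : realType} {Z : pointedType} (dZ : Z -> Z -> R).

Definition is_metric : Prop :=
  [/\ (forall x y, 0 <= dZ x y),
      (forall x y, dZ x y = 0 <-> x = y),
      (forall x y, dZ x y = dZ y x) &
      (forall x y z, dZ x z <= dZ x y + dZ y z)].

Definition ballZ (x : Z) (r : R) : set Z := [set y | dZ x y < r].

Definition openZ : set (set Z) :=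
  [set U | forall x, U x -> exists2 r : R, 0 < r & ballZ x r `<=` U].

Definition metric_compact : Prop :=
  forall s : nat -> Z, exists phi : nat -> nat,
    (forall n, (phi n < phi n.+1)%N) /\
    exists z : Z, (fun n => dZ (s (phi n)) z) @ \oo --> 0.

Definition diamZ : \bar R :=
  ereal_sup (range (fun xy : Z * Z => (dZ xy.1 xy.2)%:E)).

Definition separated (eps : R) (S : set Z) : Prop :=
  forall x y, S x -> S y -> x <> y -> eps <= dZ x y.

Definition maximal_separated (eps : R) (S : set Z) : Prop :=
  separated eps S /\
  forall S', S `<=` S' -> separated eps S' -> S' = S.

End MetricZ.

Definition doubling {R : realType} {Z : pointedType} (dZ : Z -> Z -> R)
  (nu : {measure set (g_sigma_algebraType (openZ dZ)) -> \bar R}) : Prop :=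
  (forall (x : Z) (r : R), 0 < r ->
      (0 < nu (ballZ dZ x r))%E /\ (nu (ballZ dZ x r) < +oo)%E) /\
  exists C : R, forall (x : Z) (r : R), 0 < r ->
      (nu (ballZ dZ x (2 * r)) <= C%:E * nu (ballZ dZ x r))%E.

Section Filling.
Context {R : realType} {Z : pointedType} (dZ : Z -> Z -> R)
  (A : nat -> set Z) (alpha tau : R) (z0 : Z).

Definition inV (v : Z * nat) : Prop := A v.2 v.1.

Definition root : Z * nat := (z0, 0%N).

Definition adj (v w : Z * nat) : Prop :=
  [/\ inV v, inV w, v <> w,
      (v.2 <= w.2.+1)%N /\ (w.2 <= v.2.+1)%N &
      (* tau^(1 - |n - m|) is tau if n = m and 1 if |n - m| = 1 *)
      let c := if v.2 == w.2 then tau else 1 in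
      exists z : Z, ballZ dZ v.1 (c * alpha ^- v.2) z /\
                    ballZ dZ w.1 (c * alpha ^- w.2) z].

Definition vpath (k : nat) (v w : Z * nat) : Prop :=
  exists f : nat -> Z * nat,
    [/\ f 0%N = v, f k = w & forall i, (i < k)%N -> adj (f i) (f i.+1)].

Definition distV (v w : Z * nat) : R :=
  inf [set (k%:R : R) | k in [set k | vpath k v w]].

(* Points of the metric graph X: a triple (v, w, t) is the point at
   distance t from v on the edge [v, w] (t in [0,1]); the triple
   (v, v, 0) with v a vertex represents the vertex v itself.  Several
   triples represent the same point of X (they are at dG-distance 0). *)
Definition XP : Type := ((Z * nat) * (Z * nat) * R)%type.

Definition validX : set XP :=
  [set p | (p.1.1 = p.1.2 /\ inV p.1.1 /\ p.2 = 0) \/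
           (adj p.1.1 p.1.2 /\ 0 <= p.2 <= 1)].

Definition vert (v : Z * nat) : XP := (v, v, 0).

(* the path metric of X (unit-length edges) *)
Definition via_ends (p q : XP) : R :=
  let '(v, w, t) := p in let '(v', w', t') := q in
  Num.min (Num.min (t + distV v v' + t') (t + distV v w' + (1 - t')))
          (Num.min ((1 - t) + distV w v' + t') ((1 - t) + distV w w' + (1 - t'))).

Definition dG (p q : XP) : R :=
  let '(v, w, t) := p in let '(v', w', t') := q in
  if (v == v') && (w == w') then Num.min `|t - t'| (via_ends p q)
  else if (v == w') && (w == v') then Num.min `|t - (1 - t')| (via_ends p q)
  else via_ends p q.

Definition xnorm (p : XP) : R :=
  let '(v, w, t) := p in
  Num.min (t + distV v root) ((1 - t) + distV w root).

Definition eps : R := ln alpha.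

Definition openX : set (set XP) :=
  [set U | U `<=` validX /\
     forall p, U p -> exists2 r : R, 0 < r &
       forall q, validX q -> dG p q < r -> U q].


(* functions on X: functions on the representatives that do not depend on
   the chosen representative, and are Borel on X *)
Definition respects {T : Type} (f : XP -> T) : Prop :=
  forall p q, validX p -> validX q -> dG p q = 0 -> f p = f q.

Definition borelX_e (f : XP -> \bar R) : Prop :=
  forall B : set (\bar R), measurable B -> <<s openX >> (validX `&` f @^-1` B).

Definition borelX_r (f : XP -> R) : Prop :=
  forall B : set R, measurable B -> <<s openX >> (validX `&` f @^-1` B).

Definition is_curve (gamma : R -> XP) (a b : R) : Prop :=
  a < b /\
  (forall s, a <= s <= b -> validX (gamma s)) /\
  forall s, a <= s <= b -> forall e : R, 0 < e ->
    exists2 d : R, 0 < d & forall s', a <= s' <= b -> `|s - s'| < d ->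
      dG (gamma s) (gamma s') < e.

Definition nonconstant (gamma : R -> XP) (a b : R) : Prop :=
  exists s, a <= s <= b /\ 0 < dG (gamma a) (gamma s).

Definition psum (gamma : R -> XP) (s : seq R) : R :=
  \sum_(i < (size s).-1) dG (gamma (nth 0 s i)) (gamma (nth 0 s i.+1)).

Definition clength (gamma : R -> XP) (a t : R) : \bar R :=
  ereal_sup [set (psum gamma s)%:E | s in
     [set s : seq R | sorted <=%R s /\ all (fun x => a <= x <= t) s]].

Definition rectifiable (gamma : R -> XP) (a b : R) : Prop :=
  (clength gamma a b < +oo)%E.

(* arc-length parametrisation: sigma |-> gamma(t) for t with s_gamma(t)=sigma *)
Definition arcparam (gamma : R -> XP) (a b : R) (sigma : R) : XP :=
  gamma (inf [set t | a <= t <= b /\ (sigma%:E <= clength gamma a t)%E]).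

(* line integral int_gamma g ds, where ds = e^{-eps |x|} d|x| *)
Definition line_int (gamma : R -> XP) (a b : R) (g : XP -> \bar R) : \bar R :=
  let I : set R := [set` `[(0:R), fine (clength gamma a b)]] in
  (\int[lebesgue_measure]_(sigma in I)
     (g (arcparam gamma a b sigma) *
      (expR (- eps * xnorm (arcparam gamma a b sigma)))%:E))%E.

Definition upper_gradient (u : XP -> R) (g : XP -> \bar R) : Prop :=
  respects g /\ borelX_e g /\ (forall p, validX p -> (0 <= g p)%E) /\
  forall (gamma : R -> XP) (a b : R),
    is_curve gamma a b -> nonconstant gamma a b -> rectifiable gamma a b ->
    (`|u (gamma a) - u (gamma b)|%:E <= line_int gamma a b g)%E.

End Filling.

Section Newtonian.
Context {R : realType} {Z : pointedType} (dZ : Z -> Z -> R)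
  (nu : {measure set (g_sigma_algebraType (openZ dZ)) -> \bar R})
  (A : nat -> set Z) (alpha tau : R) (z0 : Z) (rho : R -> R).

Local Notation adj := (adj dZ A alpha tau).
Local Notation XP := (@XP R Z).

Definition Bv (v : Z * nat) : set Z := ballZ dZ v.1 (alpha ^- v.2).

(* int_X f dmu for f >= 0, where
   dmu(x) = rho(|x|) (nu(B_v1) + nu(B_v2)) d|x| on the edge [v1, v2]
   (each edge is counted twice in the sum over ordered pairs) *)
Definition unit_itv : set R := [set` `[(0:R), (1:R)]].

Definition mu_int (f : XP -> \bar R) : \bar R :=
  ((2^-1)%:E *
   \esum_(vw in [set vw : (Z * nat) * (Z * nat) | adj vw.1 vw.2])
      ((nu (Bv vw.1) + nu (Bv vw.2)) *
       \int[lebesgue_measure]_(t in unit_itv)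
          (f (vw.1, vw.2, t) * (rho (xnorm dZ A alpha tau z0 (vw.1, vw.2, t)))%:E)))%E.

Definition in_Lp_r (p : R) (u : XP -> R) : Prop :=
  respects dZ A alpha tau u /\ borelX_r dZ A alpha tau u /\
  (mu_int (fun x => (`|u x| `^ p)%:E) < +oo)%E.

Definition in_Lp_e (p : R) (g : XP -> \bar R) : Prop :=
  (mu_int (fun x => (g x `^ p)%E) < +oo)%E.

Definition in_N1p (p : R) (u : XP -> R) : Prop :=
  in_Lp_r p u /\
  exists g : XP -> \bar R,
    upper_gradient dZ A alpha tau z0 u g /\ in_Lp_e p g.

End Newtonian.

Section Traces.
Context {R : realType} {Z : pointedType} (dZ : Z -> Z -> R)
  (nu : {measure set (g_sigma_algebraType (openZ dZ)) -> \bar R})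
  (A : nat -> set Z) (alpha : R).

Definition An_xi (n : nat) (xi : Z) : set Z :=
  A n `&` ballZ dZ xi (alpha ^- n).

(* a geodesic ray [v0, xi): v_n(xi) = (xs n, n) with xs n in A_n(xi);
   its points are (v_n, v_{n+1}, t), t in [0,1] *)
Definition is_ray (xi : Z) (xs : nat -> Z) : Prop :=
  forall n, An_xi n xi (xs n).

Definition ray_point (xs : nat -> Z) (n : nat) (t : R) : @XP R Z :=
  ((xs n, n), (xs n.+1, n.+1), t).

Definition ray_limit (u : @XP R Z -> R) (xs : nat -> Z) (L : R) : Prop :=
  forall e : R, 0 < e -> exists N : nat, forall n : nat, (N <= n)%N ->
    forall t : R, 0 <= t <= 1 -> `|u (ray_point xs n t) - L| < e.

Definition trace_T_exists (u : @XP R Z -> R) : Prop :=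
  {ae nu, forall xi : g_sigma_algebraType (openZ dZ),
     exists L : R, forall xs, is_ray xi xs -> ray_limit u xs L}.

Definition u_avg (u : @XP R Z -> R) (xi : Z) (n : nat) : R :=
  (\sum_(z \in An_xi n xi) u (vert (z, n))) / (\sum_(z \in An_xi n xi) (1 : R)).

Definition trace_tilde_is (u : @XP R Z -> R) (c : R) : Prop :=
  {ae nu, forall xi : g_sigma_algebraType (openZ dZ),
     u_avg u xi @ \oo --> c}.

Definition trace_tilde_exists (u : @XP R Z -> R) : Prop :=
  {ae nu, forall xi : g_sigma_algebraType (openZ dZ),
     cvgn (u_avg u xi)}.

End Traces.

(* Main.v *)
Require Import Defs.
From HB Require Import structures.
From mathcomp Require Import all_boot all_order all_algebra.
From mathcomp Require Import all_classical all_reals all_analysis.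
From mathcomp Require Import measurable_realfun.
From mathcomp Require Import ring lra zify.
Import Order.TTheory GRing.Theory Num.Theory.
Import numFieldNormedType.Exports.
Local Open Scope classical_set_scope.
Local Open Scope ring_scope.
Set Implicit Arguments.
Unset Strict Implicit.
Unset Printing Implicit Defensive.

Section Graph.
Context {R : realType} {Z : pointedType} (dZ : Z -> Z -> R)
  (A : nat -> set Z) (alpha tau : R) (z0 : Z).

Local Notation adj := (adj dZ A alpha tau).
Local Notation vpath := (vpath dZ A alpha tau).
Local Notation distV := (distV dZ A alpha tau).

Lemma adj_sym v w : adj v w -> adj w v.
Proof.
case=> iv iw vw [l1 l2] [z [z1 z2]]; split => //.
- by move=> e; apply: vw.
- by rewrite eq_sym; exists z.
Qed.

Lemma vpath_rev k v w : vpath k v w -> vpath k w v.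
Proof.
case=> f [f0 fk fa]; exists (fun i => f (k - i)%N); split.
- by rewrite subn0.
- by rewrite subnn.
- move=> i ik; apply: adj_sym.
  have -> : (k - i = (k - i.+1).+1)%N by lia.
  apply: fa; lia.
Qed.

Lemma vpath_cat k l u v w : vpath k u v -> vpath l v w -> vpath (k + l) u w.
Proof.
case=> f [f0 fk fa]; case=> g [g0 gl ga].
exists (fun i => if (i <= k)%N then f i else g (i - k)%N); split.
- by rewrite leq0n.
- case: (leqP (k + l) k) => h.
  + have l0 : l = 0%N by move: h; rewrite -{2}(addn0 k) leq_add2l leqn0 => /eqP.
    by subst l; rewrite addn0 fk -g0 -gl.
  + by rewrite addKn.
- move=> i ikl /=; case: (ltnP i k) => h.
  + have -> : (i <= k)%N by lia.
    by rewrite ?h; apply: fa.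
  + case: (leqP i k) => h2.
    * have ek : i = k by lia.
      subst i; have -> : (k.+1 - k = 1)%N by lia.
      rewrite fk -g0; apply: ga; lia.
    * have -> : (i.+1 - k = (i - k).+1)%N by lia.
      apply: ga; lia.
Qed.

Lemma vpath_level k v w : vpath k v w -> (v.2 <= k + w.2)%N.
Proof.
case=> f [f0 fk fa].
suff H : forall i, (i <= k)%N -> ((f 0%N).2 <= i + (f i).2)%N.
  by have := H k (leqnn k); rewrite f0 fk.
elim=> [|i IH] ik; first by rewrite add0n.
have [_ _ _ [l1 l2] _] := fa i ik.
apply: (leq_trans (IH (ltnW ik))); rewrite addSn -addnS leq_add2l //.
Qed.

Definition Sdist v w : set R := [set (k%:R : R) | k in [set k | vpath k v w]].

Lemma distV_ge0 v w : 0 <= distV v w.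
Proof.
rewrite /Defs.distV; have [[x Sx]|] := pselect (exists x, [set (k%:R : R) | k in [set k | vpath k v w]] x).
  by apply: lb_le_inf; [exists x|move=> y [k _ <-]].
move=> /forallNP H; rewrite (_ : [set _ | _ in _] = set0) ?inf0 //.
by apply/seteqP; split => // x /H.
Qed.

Lemma distV_le k v w : vpath k v w -> distV v w <= k%:R.
Proof.
move=> h; apply: ge_inf; last by exists k.
by exists 0 => y [j _ <-].
Qed.

Lemma distV_sym v w : distV v w = distV w v.
Proof.
rewrite /Defs.distV; congr inf; apply/seteqP; split => x [k hk <-]; exists k => //=;
  exact: vpath_rev.
Qed.

Lemma distV_tri x y r : (exists k, vpath k x y) -> (exists k, vpath k y r) ->
  distV x r <= distV x y + distV y r.
Proof.
move=> [k0 h0] [l0 h1].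
have H1 : forall k l, vpath k x y -> vpath l y r -> distV x r <= k%:R + l%:R.
  by move=> k l hk hl; rewrite -natrD; apply: distV_le; apply: vpath_cat hk hl.
have H2 : forall l, vpath l y r -> distV x r - l%:R <= distV x y.
  move=> l hl; apply: lb_le_inf; first by exists k0%:R, k0.
  by move=> _ [k hk <-]; have := H1 k l hk hl; lra.
rewrite -lerBlDl; apply: lb_le_inf; first by exists l0%:R, l0.
by move=> _ [l hl <-]; have := H2 l hl; lra.
Qed.

Lemma vpath1 v w : adj v w -> vpath 1 v w.
Proof. by move=> h; exists (fun i => if i is 0%N then v else w); split => // -[]. Qed.

Lemma distV_adj v w : adj v w -> distV v w <= 1.
Proof. by move=> h; have := distV_le (vpath1 h). Qed.

Hypothesis Hm : is_metric dZ.
Hypothesis Hdiam : (diamZ dZ < 1)%E.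
Hypothesis Ha : 1 < alpha.
Hypothesis HA0 : A 0%N = [set z0].
Hypothesis Hmax : forall n : nat, (0 < n)%N -> maximal_separated dZ (alpha ^- n) (A n).

Lemma dZ_lt1 x y : dZ x y < 1.
Proof.
have h : ((dZ x y)%:E <= diamZ dZ)%E by apply: ereal_sup_ubound; exists (x, y).
by rewrite -lte_fin; apply: le_lt_trans h Hdiam.
Qed.

Lemma dZ_sym x y : dZ x y = dZ y x.
Proof. by case: Hm => _ _ H _; apply: H. Qed.

Lemma dZ_ge0 x y : 0 <= dZ x y.
Proof. by case: Hm => H _ _ _; apply: H. Qed.

Lemma dZ_xx x : dZ x x = 0.
Proof. by case: Hm => _ H _ _; apply/H. Qed.

Lemma dZ_tri x y z : dZ x z <= dZ x y + dZ y z.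
Proof. by case: Hm => _ _ _ H; apply: H. Qed.

Lemma alphan_gt0 n : 0 < alpha ^- n.
Proof. by rewrite invr_gt0 exprn_gt0 // (lt_trans ltr01 Ha). Qed.

Lemma cover n xi : exists2 y, A n y & dZ xi y < alpha ^- n.
Proof.
case: n => [|n].
  by exists z0; [rewrite HA0|rewrite expr0 invr1; apply: dZ_lt1].
case: (pselect (exists2 y, A n.+1 y & dZ xi y < alpha ^- n.+1)) => // H; exfalso.
have [sep maxi] := Hmax (ltn0Sn n).
have Hn : forall y, A n.+1 y -> alpha ^- n.+1 <= dZ xi y.
  by move=> y Ay; rewrite leNgt; apply/negP => lt; apply: H; exists y.
have nA : ~ A n.+1 xi.
  by move=> Ax; have := Hn _ Ax; rewrite dZ_xx leNgt alphan_gt0.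
have e : A n.+1 `|` [set xi] = A n.+1.
  apply: maxi; first exact: subsetUl.
  move=> x y [Ax|->] [Ay|->] xy.
  + exact: sep.
  + by rewrite dZ_sym; apply: Hn.
  + by apply: Hn.
  + by case: xy.
by apply: nA; rewrite -e; right.
Qed.

Lemma path_root n x : A n x -> vpath n (x, n) (Defs.root z0).
Proof.
elim: n x => [|n IH] x Ax.
  rewrite HA0 in Ax; rewrite Ax.
  by exists (fun _ => Defs.root z0); split.
have [y Ay dxy] := cover n x.
have [f [f0 fn fa]] := IH y Ay.
exists (fun i => if i is j.+1 then f j else (x, n.+1)); split => //.
case=> [_|i]; last by rewrite ltnS => /fa.
rewrite f0; split => //=.
- by case => _; lia.
- by split; lia.
- have -> : (n.+1 == n) = false by lia.
  exists x; split; rewrite /ballZ /= mul1r.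
  + by rewrite dZ_xx alphan_gt0.
  + by rewrite dZ_sym.
Qed.

Lemma inV_path v : inV A v -> vpath v.2 v (Defs.root z0).
Proof. by case: v => x n /= h; apply: path_root. Qed.

Lemma D_ge v : inV A v -> (v.2)%:R <= distV v (Defs.root z0).
Proof.
move=> h; apply: lb_le_inf; first by exists (v.2)%:R, v.2 => //; apply: inV_path.
move=> _ [k hk <-]; rewrite ler_nat; have := vpath_level hk.
by rewrite addn0.
Qed.

Lemma conn x y : inV A x -> inV A y -> exists k, vpath k x y.
Proof.
move=> hx hy; exists (x.2 + y.2)%N; apply: vpath_cat (inV_path hx) _.
exact: vpath_rev (inV_path hy).
Qed.

Lemma D_tri x y : inV A x -> inV A y ->
  distV x (Defs.root z0) <= distV x y + distV y (Defs.root z0).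
Proof.
move=> hx hy; apply: distV_tri; first exact: conn.
by exists y.2; apply: inV_path.
Qed.


Lemma min_lip (x y x' y' e : R) : `|x - x'| <= e -> `|y - y'| <= e ->
  `|Num.min x y - Num.min x' y'| <= e.
Proof.
rewrite !ler_norml => /andP[h1 h2] /andP[h3 h4].
case: (leP x y) => c1; case: (leP x' y') => c2;
  rewrite ?(min_l (ltW c1)) ?(min_r (ltW c1)) ?(min_l c1) ?(min_r c1)
          ?(min_l (ltW c2)) ?(min_r (ltW c2)) ?(min_l c2) ?(min_r c2);
  apply/andP; split; lra.
Qed.

Lemma term_bound (a b Fp Fq Px Py d : R) : Fp <= a + Px -> Px <= d + Py ->
  Py <= b + Fq -> Fq <= b + Py -> Py <= d + Px -> Px <= a + Fp ->
  `|Fp - Fq| <= a + d + b.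
Proof. move=> *; rewrite ler_norml; apply/andP; split; lra. Qed.

Local Notation validX := (validX dZ A alpha tau).
Local Notation dG := (dG dZ A alpha tau).

Lemma lip_dG (F : XP -> R) (Phi : Z * nat -> R) :
  (forall v w t t', `|F (v, w, t) - F (v, w, t')| <= `|t - t'|) ->
  (forall v w t, F (w, v, t) = F (v, w, 1 - t)) ->
  (forall v w t, validX (v, w, t) ->
     [/\ F (v, w, t) <= t + Phi v, F (v, w, t) <= 1 - t + Phi w,
         Phi v <= t + F (v, w, t) & Phi w <= 1 - t + F (v, w, t)]) ->
  (forall x y, inV A x -> inV A y -> Phi x <= distV x y + Phi y) ->
  forall p q, validX p -> validX q -> `|F p - F q| <= dG p q.
Proof.
move=> Hs Hr Hb Ht [[v w] t] [[v' w'] t'] vp vq.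
have [p1 p2 p3 p4] := Hb _ _ _ vp.
have [q1 q2 q3 q4] := Hb _ _ _ vq.
have iv : forall a b s, validX (a, b, s) -> inV A a /\ inV A b.
  by move=> a b s [[/= -> [h _]]|[[h1 h2 _ _ _] _]].
have [iv1 iw1] := iv _ _ _ vp; have [iv2 iw2] := iv _ _ _ vq.
have T : `|F (v, w, t) - F (v', w', t')| <= via_ends dZ A alpha tau (v, w, t) (v', w', t').
  rewrite /via_ends !le_min; apply/andP; split; apply/andP; split;
    (apply: term_bound; [eassumption|apply: Ht => //|eassumption|eassumption|
      rewrite distV_sym; apply: Ht => //|eassumption]).
rewrite /Defs.dG /=; case: ifP => [/andP[/eqP e1 /eqP e2]|_].
  subst v' w'; rewrite le_min T andbT; exact: Hs.
case: ifP => [/andP[/eqP e1 /eqP e2]|_] //.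
subst v' w'; rewrite le_min T andbT (Hr v w t').
exact: Hs.
Qed.


Definition tent (t : R) := Num.min t (1 - t).
Definition uu (p : @XP R Z) : R := if p.1.1.2 != p.1.2.2 then tent p.2 else 0.
Local Notation D v := (distV v (Defs.root z0)).
Local Notation xn := (xnorm dZ A alpha tau z0).

Lemma valid_t v w t : validX (v, w, t) -> 0 <= t <= 1.
Proof. by case=> [[_ [_ /= ->]]|[_ h]] //; rewrite lexx ler01. Qed.

Lemma valid_inV v w t : validX (v, w, t) -> inV A v /\ inV A w.
Proof. by case=> [[/= -> [h _]]|[[h1 h2 _ _ _] _]]. Qed.

Lemma valid_D v w t : validX (v, w, t) -> D v <= 1 + D w /\ D w <= 1 + D v.
Proof.
case=> [[/= -> _]|[h _]]; first by split; lra.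
have [h1 h2 _ _ _] := h.
split.
- by apply: le_trans (D_tri h1 h2) _; rewrite lerD2r; apply: distV_adj.
- by apply: le_trans (D_tri h2 h1) _; rewrite lerD2r; apply: distV_adj (adj_sym h).
Qed.

Lemma uu_lip p q : validX p -> validX q -> `|uu p - uu q| <= dG p q.
Proof.
apply: (lip_dG (Phi := fun _ => 0)).
- move=> v w t t'; rewrite /uu /=; case: (v.2 != w.2); last by rewrite subrr normr0.
  apply: min_lip => //; rewrite (_ : 1 - t - (1 - t') = - (t - t')) ?normrN //.
  by ring.
- move=> v w t; rewrite /uu /= eq_sym /tent (_ : 1 - (1 - t) = t);
    [by rewrite minC | by ring].
- move=> v w t vp; have /andP[t0 t1] := valid_t vp.
  have [m1 [m2 m3]] : Num.min t (1-t) <= t /\ Num.min t (1-t) <= 1 - t /\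
    0 <= Num.min t (1-t).
    split; first by rewrite ge_min lexx.
    split; first by rewrite ge_min lexx orbT.
    by rewrite le_min; apply/andP; split; lra.
  rewrite /uu /tent /=; case: ifP => _; split; lra.
- by move=> x y _ _; rewrite addr0 distV_ge0.
Qed.

Lemma xn_lip p q : validX p -> validX q -> `|xn p - xn q| <= dG p q.
Proof.
apply: (lip_dG (Phi := fun v => D v)).
- move=> v w t t'; apply: min_lip.
  + by rewrite opprD addrACA subrr addr0.
  + rewrite opprD addrACA subrr addr0 (_ : 1 - t - (1 - t') = - (t - t')) ?normrN //.
    by ring.
- move=> v w t; rewrite /xnorm /= (_ : 1 - (1 - t) = t);
    [by rewrite minC | by ring].
- move=> v w t vp; have /andP[t0 t1] := valid_t vp.
  have [d1 d2] := valid_D vp.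
  rewrite /xnorm; split; rewrite ?ge_min ?lexx ?orbT //;
  case: (leP (t + D v) (1 - t + D w)) => c;
    rewrite ?(min_l c) ?(min_r (ltW c)); lra.
- by move=> x y hx hy; apply: D_tri.
Qed.


Local Notation openX := (openX dZ A alpha tau).

Lemma lip_mfun (F : XP -> R) :
  (forall p q, validX p -> validX q -> `|F p - F q| <= dG p q) ->
  measurable_fun (validX : set (g_sigma_algebraType openX)) (F : g_sigma_algebraType openX -> R).
Proof.
move=> HF; apply: (measurability _ (RGenOInfty.measurableE R)).
move=> _ [_ [x ->] <-]; apply: sub_sigma_algebra; split; first by move=> p [].
move=> p [vp /=]; rewrite in_itv /= andbT => xp.
exists (F p - x); first by rewrite subr_gt0.
move=> q vq dpq; split => //=; rewrite in_itv /= andbT.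
have := HF _ _ vp vq; rewrite ler_norml => /andP[_ h]; lra.
Qed.

Lemma validX_meas : measurable (validX : set (g_sigma_algebraType openX)).
Proof.
apply: sub_sigma_algebra; split => // p vp; exists 1 => //.
Qed.

Lemma lip_borel (F : XP -> R) :
  (forall p q, validX p -> validX q -> `|F p - F q| <= dG p q) ->
  borelX_r dZ A alpha tau F.
Proof. by move=> HF B mB; apply: (lip_mfun HF validX_meas). Qed.

Lemma lip_respects (F : XP -> R) :
  (forall p q, validX p -> validX q -> `|F p - F q| <= dG p q) ->
  respects dZ A alpha tau F.
Proof.
move=> HF p q vp vq d0; have := HF _ _ vp vq; rewrite d0 normr_le0 subr_eq0.
by move/eqP.
Qed.

Definition gg (p : @XP R Z) : \bar R := (expR (eps alpha * xn p))%:E.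

Lemma gg_borel : borelX_e dZ A alpha tau gg.
Proof.
move=> B mB.
have mx := lip_mfun xn_lip.
have : measurable_fun (validX : set (g_sigma_algebraType openX)) (gg : g_sigma_algebraType openX -> \bar R).
  apply: measurableT_comp; first exact: EFin_measurable.
  apply: measurableT_comp; first exact: measurable_expR.
  apply: measurableT_comp => //; exact: mulrl_measurable.
by move=> h; apply: h validX_meas _ mB.
Qed.

Lemma gg_respects : respects dZ A alpha tau gg.
Proof. by move=> p q vp vq d0; rewrite /gg (lip_respects xn_lip vp vq d0). Qed.


Lemma gg_ug : upper_gradient dZ A alpha tau z0 uu gg.
Proof.
split; first exact: gg_respects.
split; first exact: gg_borel.
split; first by move=> p _; rewrite lee_fin expR_ge0.
move=> gamma a b [ab [gv _]] _ rect.
have va : validX (gamma a) by apply: gv; rewrite lexx ltW.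
have vb : validX (gamma b) by apply: gv; rewrite lexx ltW.
have h1 : ((dG (gamma a) (gamma b))%:E <= clength dZ A alpha tau gamma a b)%E.
  apply: ereal_sup_ubound; exists [:: a; b].
    split; first by rewrite /= andbT ltW.
    by rewrite /= lexx ltW // lexx.
  by rewrite /psum /= big_ord1.
have hu := uu_lip va vb.
rewrite /line_int.
move: rect h1; rewrite /rectifiable.
case: (clength dZ A alpha tau gamma a b) => [r| |] //= _ h1.
rewrite (eq_integral (cst 1%E)); last first.
  by move=> x _; rewrite /gg -EFinM -expRD mulNr addrN expR0.
rewrite integral_cst /=; last exact: measurable_itv.
rewrite lebesgue_measure_itv /= mul1e.
rewrite lee_fin in h1.
case: ifP => [_|/negbT]; first by rewrite lee_fin subr0; apply: le_trans hu h1.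
rewrite -leNgt => r0; rewrite lee_fin.
by apply: le_trans hu (le_trans h1 _).
Qed.

End Graph.


Lemma pow_le_pow (R : realType) (x y : R) n : 0 <= x -> x <= y -> x ^+ n <= y ^+ n.
Proof.
move=> x0 xy; elim: n => [|n IH]; first by rewrite !expr0.
rewrite !exprS; apply: ler_pM => //; first exact: exprn_ge0.
Qed.

Section Meas.
Context {R : realType} {Z : pointedType} (dZ : Z -> Z -> R)
  (nu : {measure set (g_sigma_algebraType (openZ dZ)) -> \bar R})
  (A : nat -> set Z) (alpha : R) (z0 : Z) (C : R).

Hypothesis Hm : is_metric dZ.
Hypothesis Hdiam : (diamZ dZ < 1)%E.
Hypothesis Ha : 1 < alpha.
Hypothesis HA0 : A 0%N = [set z0].
Hypothesis Hmax : forall n : nat, (0 < n)%N -> maximal_separated dZ (alpha ^- n) (A n).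
Hypothesis Hpos : forall (x : Z) (r : R), 0 < r ->
      (0 < nu (ballZ dZ x r))%E /\ (nu (ballZ dZ x r) < +oo)%E.
Hypothesis HC : forall (x : Z) (r : R), 0 < r ->
      (nu (ballZ dZ x (2 * r)) <= C%:E * nu (ballZ dZ x r))%E.

Local Notation T := (g_sigma_algebraType (openZ dZ)).

Lemma ball_meas x r : measurable (ballZ dZ x r : set T).
Proof.
apply: sub_sigma_algebra => y hy; exists (r - dZ x y); first by rewrite subr_gt0.
move=> z hz; rewrite /ballZ /= in hy hz |- *.
have := dZ_tri Hm x y z; lra.
Qed.

Definition mb x r := fine (nu (ballZ dZ x r : set T)).

Lemma nu_ball x r : 0 < r -> nu (ballZ dZ x r : set T) = (mb x r)%:E /\ 0 < mb x r.
Proof.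
move=> r0; have [h1 h2] := Hpos x r0.
have f : nu (ballZ dZ x r : set T) \is a fin_num by rewrite ge0_fin_numE // ltW.
by rewrite /mb; split; [rewrite fineK | rewrite -lte_fin fineK].
Qed.

Lemma ballT x r : 1 <= r -> (ballZ dZ x r : set T) = setT.
Proof.
move=> r1; apply/seteqP; split => // y _; rewrite /ballZ /=.
by apply: lt_le_trans r1; apply: dZ_lt1.
Qed.

Definition MT := mb z0 1.

Lemma mb_big x r : 1 <= r -> mb x r = MT.
Proof. by move=> r1; rewrite /MT /mb !ballT ?lexx. Qed.

Lemma MT_gt0 : 0 < MT.
Proof. exact: (nu_ball z0 ltr01).2. Qed.

Definition Cd := Num.max C 1.

Lemma Cd_ge1 : 1 <= Cd.
Proof. by rewrite /Cd le_max lexx orbT. Qed.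

Lemma dbl x r : 0 < r -> mb x (2 * r) <= Cd * mb x r.
Proof.
move=> r0; have [e1 p1] := nu_ball x r0.
have r20 : 0 < 2 * r by rewrite mulr_gt0.
have [e2 p2] := nu_ball x r20.
have := HC x r0; rewrite e1 e2 lee_fin => h.
apply: le_trans h _; apply: ler_wpM2r; first exact: ltW.
by rewrite /Cd le_max lexx.
Qed.

Lemma dbl_iter x r k : 0 < r -> mb x (2 ^+ k * r) <= Cd ^+ k * mb x r.
Proof.
move=> r0; elim: k => [|k IH]; first by rewrite !expr0 !mul1r.
rewrite exprS -mulrA; apply: le_trans (dbl x _) _.
  by rewrite mulr_gt0 // exprn_gt0.
rewrite exprS -mulrA; apply: ler_wpM2l => //.
by apply: le_trans ler01 Cd_ge1.
Qed.

Lemma MT_le x r k : 0 < r -> 1 <= 2 ^+ k * r -> MT <= Cd ^+ k * mb x r.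
Proof. by move=> r0 h; rewrite -(mb_big x h); apply: dbl_iter. Qed.

Lemma mb_le x r : 0 < r -> mb x r <= MT.
Proof.
move=> r0; have [e1 _] := nu_ball x r0; have [e2 _] := nu_ball z0 (@ltr01 R).
rewrite -lee_fin -e1 /MT -e2 (@ballT z0 1 (lexx 1)).
by apply: le_measure; rewrite ?inE //; apply: ball_meas.
Qed.

Lemma sep_disj n x y : (0 < n)%N -> A n x -> A n y -> x != y ->
  (ballZ dZ x (alpha ^- n / 2) `&` ballZ dZ y (alpha ^- n / 2) : set T) = set0.
Proof.
move=> n0 ax ay xy; apply/seteqP; split => // z [hx hy].
have [sep _] := Hmax n0.
have xy' : x <> y by apply/eqP.
have := sep x y ax ay xy'.
rewrite /ballZ /= in hx hy.
have := dZ_tri Hm x z y; rewrite (dZ_sym Hm z y); lra.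
Qed.

Lemma sum_balls n (X : seq Z) : (0 < n)%N -> uniq X -> (forall x, x \in X -> A n x) ->
  \sum_(x <- X) mb x (alpha ^- n / 2) <= MT.
Proof.
move=> n0 uX AX; set r := alpha ^- n / 2.
have r0 : 0 < r by rewrite divr_gt0 // (alphan_gt0 Ha).
suff : nu (\big[setU/set0]_(x <- X) ballZ dZ x r : set T) = (\sum_(x <- X) mb x r)%:E.
  move=> e; rewrite -lee_fin -e; have [e2 _] := nu_ball z0 (@ltr01 R).
  rewrite /MT -e2 (@ballT z0 1 (lexx 1)).
  apply: le_measure; rewrite ?inE //.
  by apply: bigsetU_measurable => i _; apply: ball_meas.
elim: X uX AX => [|x X IH] /= uX AX; first by rewrite !big_nil measure0.
move/andP: uX => [xX uX].
rewrite !big_cons measureU.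
- rewrite EFinD; congr (_ + _)%E; first exact: (nu_ball x r0).1.
  apply: IH => // y yX.
  by apply: AX; rewrite inE yX orbT.
- exact: ball_meas.
- by apply: bigsetU_measurable => i _; apply: ball_meas.
- apply/seteqP; split => // z [hz]; rewrite -bigcup_seq => -[y yX hy].
  have := sep_disj n0 (AX x (mem_head _ _)) (AX y _) _.
  rewrite inE yX orbT => /(_ isT).
  have -> : (x != y) by apply/negP => /eqP e; move: xX; rewrite e yX.
  by move=> /(_ isT) e; rewrite -e; split.
Qed.


Lemma count_A0 n (X : seq Z) k : (0 < n)%N -> uniq X -> (forall x, x \in X -> A n x) ->
  1 <= 2 ^+ k * (alpha ^- n / 2) -> (size X)%:R <= Cd ^+ k.
Proof.
move=> n0 uX AX hk; set r := alpha ^- n / 2.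
have r0 : 0 < r by rewrite divr_gt0 // (alphan_gt0 Ha).
have H1 : (size X)%:R * MT <= Cd ^+ k * \sum_(x <- X) mb x r.
  elim: X {uX AX} => [|x X IH]; first by rewrite big_nil mul0r mulr0.
  rewrite big_cons /= mulrDr -addn1 natrD mulrDl mul1r addrC.
  by apply: lerD => //; apply: MT_le.
have H2 := sum_balls n0 uX AX.
have H3 : (size X)%:R * MT <= Cd ^+ k * MT.
  apply: le_trans H1 _; apply: ler_wpM2l => //.
  by apply: exprn_ge0; apply: le_trans ler01 Cd_ge1.
by rewrite -(ler_pM2r MT_gt0).
Qed.

Definition Ka : nat := (Num.trunc alpha).+1.

Lemma alpha_le : alpha <= 2 ^+ Ka.
Proof.
apply: le_trans (ltW (truncnS_gt alpha)) _.
by rewrite -natrX ler_nat; apply: ltnW; apply: ltn_expl.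
Qed.

Lemma radius_ok n : 1 <= 2 ^+ (Ka * n + 1) * (alpha ^- n / 2).
Proof.
have a0 : 0 < alpha by apply: lt_trans ltr01 Ha.
have e : 2 ^+ (Ka * n + 1) * (alpha ^- n / 2) = (2 ^+ Ka) ^+ n / alpha ^+ n.
  rewrite exprD exprM expr1; field.
  by rewrite expf_neq0 // gt_eqF.
rewrite e ler_pdivlMr ?mul1r ?exprn_gt0 //.
by apply: pow_le_pow; [exact: ltW | exact: alpha_le].
Qed.

Lemma count_A n (X : seq Z) : (0 < n)%N -> uniq X -> (forall x, x \in X -> A n x) ->
  (size X)%:R <= Cd ^+ (Ka * n + 1).
Proof. by move=> n0 uX AX; apply: count_A0 n0 uX AX (radius_ok n). Qed.


Context (tau : R).
Hypothesis HAm : forall n m : nat, (n < m)%N -> A n `<=` A m.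

Definition lvl (x : (Z * nat) * (Z * nat)) : nat := minn x.1.2 x.2.2.

Lemma count_level (s : seq ((Z * nat) * (Z * nat))) m : uniq s ->
  (forall x, x \in s -> adj dZ A alpha tau x.1 x.2) ->
  (count (fun x => lvl x == m) s)%:R <= 4 * (Cd ^+ (Ka * m.+1 + 1)) ^+ 2.
Proof.
move=> us adjs.
set sm := seq.filter (fun x => lvl x == m) s.
have usm : uniq sm by apply: seq.filter_uniq.
have adjsm : forall x, x \in sm -> adj dZ A alpha tau x.1 x.2 /\ lvl x = m.
  by move=> x; rewrite mem_filter => /andP[/eqP h xs]; split => //; apply: adjs.
have lev : forall x, x \in sm -> (x.1.2 == m) || (x.1.2 == m.+1).
  move=> x /adjsm [[_ _ _ [l1 l2] _] e]; move: e; rewrite /lvl => e.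
  have : x.1.2 = m \/ x.1.2 = m.+1.
    by move: l1 l2 e; case: x => [[a1 a2] [b1 b2]] /=; lia.
  by case => ->; rewrite eqxx ?orbT.
have lev2 : forall x, x \in sm -> (x.2.2 == m) || (x.2.2 == m.+1).
  move=> x /adjsm [[_ _ _ [l1 l2] _] e]; move: e; rewrite /lvl => e.
  have : x.2.2 = m \/ x.2.2 = m.+1.
    by move: l1 l2 e; case: x => [[a1 a2] [b1 b2]] /=; lia.
  by case => ->; rewrite eqxx ?orbT.
have Am : forall k z, (k == m) || (k == m.+1) -> A k z -> A m.+1 z.
  move=> k z /orP[/eqP ->|/eqP -> //]; apply: HAm; exact: ltnSn.
set X := undup ([seq x.1.1 | x <- sm] ++ [seq x.2.1 | x <- sm]).
have uX : uniq X by apply: undup_uniq.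
have AX : forall z, z \in X -> A m.+1 z.
  move=> z; rewrite mem_undup mem_cat => /orP[] /mapP [x xs ->].
  + by have [[h _ _ _ _] _] := adjsm x xs; apply: Am (lev x xs) h.
  + by have [[_ h _ _ _] _] := adjsm x xs; apply: Am (lev2 x xs) h.
have sX := count_A (ltn0Sn m) uX AX.
set V := [seq (z, k) | z <- X, k <- [:: m; m.+1]].
set L := [seq (a, b) | a <- V, b <- V].
have sub : {subset sm <= L}.
  move=> [[a1 a2] [b1 b2]] xs.
  have inV1 : (a1, a2) \in V.
    apply: allpairs_f; first by rewrite mem_undup mem_cat; apply/orP; left; apply/mapP; exists ((a1, a2), (b1, b2)).
    by have := lev _ xs; rewrite /= !inE.
  have inV2 : (b1, b2) \in V.
    apply: allpairs_f; first by rewrite mem_undup mem_cat; apply/orP; right; apply/mapP; exists ((a1, a2), (b1, b2)).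
    by have := lev2 _ xs; rewrite /= !inE.
  exact: allpairs_f.
have := uniq_leq_size usm sub.
rewrite /L /V !size_allpairs /= -size_filter -/sm => h.
apply: le_trans (_ : (size X * 2 * (size X * 2))%:R <= _).
  by rewrite ler_nat.
have s0 : 0 <= (size X)%:R :> R by [].
set c := Cd ^+ _ in sX *.
rewrite !natrM.
have c0 : 0 <= c by apply: le_trans s0 sX.
nra.
Qed.

End Meas.


Lemma int_mono (R : realType) (D : set R) (f g : R -> \bar R) :
  (forall x, D x -> (0 <= f x)%E) -> (forall x, D x -> (f x <= g x)%E) ->
  (\int[lebesgue_measure]_(x in D) f x <= \int[lebesgue_measure]_(x in D) g x)%E.
Proof.
move=> f0 fg.
rewrite ge0_integralE // [X in (_ <= X)%E]ge0_integralE; last first.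
  by move=> x Dx; apply: le_trans (f0 x Dx) (fg x Dx).
apply: ge_ereal_sup => _ [h hf <-]; apply: ereal_sup_ubound; exists h => //= x.
apply: le_trans (hf x) _; rewrite /patch; case: ifP => // /set_mem Dx.
exact: fg.
Qed.

Lemma sum_delta (R : realType) (F : nat -> R) k N : (k < N)%N ->
  \sum_(0 <= m < N) (k == m)%:R * F m = F k.
Proof.
elim: N => [//|N IH] kN; rewrite big_nat_recr //=.
case: (ltnP k N) => h.
  by rewrite IH // (_ : (k == N) = false) ?mul0r ?addr0 //; lia.
have e : k = N by lia.
subst k; rewrite eqxx mul1r big1_seq ?add0r // => m /andP[_].
rewrite mem_index_iota => /andP[_ mN]; rewrite (_ : (N == m) = false) ?mul0r //; lia.
Qed.

Lemma sum_by_level (R : realType) (X : eqType) (s : seq X) (l : X -> nat) (F : nat -> R) N :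
  (forall x, x \in s -> (l x < N)%N) ->
  \sum_(x <- s) F (l x) = \sum_(0 <= m < N) (count (fun x => l x == m) s)%:R * F m.
Proof.
elim: s => [|x s IH] hs; first by rewrite big_nil big1 // => m _; rewrite mul0r.
rewrite big_cons IH; last by move=> y ys; apply: hs; rewrite inE ys orbT.
rewrite -(sum_delta F (hs x (mem_head _ _))) -big_split /=; apply: eq_bigr => m _.
by rewrite natrD mulrDl.
Qed.

Lemma geom_sum (R : realType) N : \sum_(0 <= m < N) (2^-1 : R) ^+ m = 2 - 2 * 2^-1 ^+ N.
Proof.
elim: N => [|N IH]; first by rewrite big_nil expr0 mulr1 subrr.
rewrite big_nat_recr //= IH exprS; field.
by [].
Qed.

Lemma geom_le (R : realType) N : \sum_(0 <= m < N) (2^-1 : R) ^+ m <= 2.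
Proof.
rewrite geom_sum lerBlDr lerDl; apply: mulr_ge0 => //.
Qed.

Lemma quad_exp (R : realType) (q : R) m : 1 <= q ->
  q ^+ m * expR (- (m%:R) ^+ 2) <= expR (ln (2 * q) ^+ 2) * 2^-1 ^+ m.
Proof.
move=> q1; have q0 : 0 < 2 * q by rewrite mulr_gt0 //; apply: lt_le_trans ltr01 q1.
set L := ln (2 * q).
have L0 : 0 <= L by rewrite /L ln_ge0 //; rewrite -[1]mul1r ler_pM //; lra.
have e : (2 * q) ^+ m = expR (m%:R * L) by rewrite expRM_natl /L lnK // posrE.
have e2 : q ^+ m = expR (m%:R * L) * 2^-1 ^+ m.
  by rewrite -e exprMn mulrC mulrA -exprMn mulVf ?expr1n ?mul1r.
rewrite e2 mulrAC; apply: ler_wpM2r; first by apply: exprn_ge0; rewrite invr_ge0.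
rewrite -expRD ler_expR.
have m0 : 0 <= (m%:R : R) by [].
nra.
Qed.


Section MuInt.
Context {R : realType} {Z : pointedType} (dZ : Z -> Z -> R)
  (nu : {measure set (g_sigma_algebraType (openZ dZ)) -> \bar R})
  (A : nat -> set Z) (alpha tau : R) (z0 : Z) (C : R).

Hypothesis Hm : is_metric dZ.
Hypothesis Hdiam : (diamZ dZ < 1)%E.
Hypothesis Ha : 1 < alpha.
Hypothesis HA0 : A 0%N = [set z0].
Hypothesis Hmax : forall n : nat, (0 < n)%N -> maximal_separated dZ (alpha ^- n) (A n).
Hypothesis Hpos : forall (x : Z) (r : R), 0 < r ->
      (0 < nu (ballZ dZ x r))%E /\ (nu (ballZ dZ x r) < +oo)%E.
Hypothesis HC : forall (x : Z) (r : R), 0 < r ->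
      (nu (ballZ dZ x (2 * r)) <= C%:E * nu (ballZ dZ x r))%E.
Hypothesis HAm : forall n m : nat, (n < m)%N -> A n `<=` A m.

Local Notation M := (MT nu z0).
Local Notation adj := (adj dZ A alpha tau).
Local Notation xn := (xnorm dZ A alpha tau z0).

Definition cst_q := Cd C ^+ (2 * Ka alpha).
Definition Kc := 2 * M * (4 * Cd C ^+ (2 * Ka alpha + 2) * expR (ln (2 * cst_q) ^+ 2) * 2).

Lemma Cd_ge1' : 1 <= Cd C.
Proof. exact: Cd_ge1. Qed.

Lemma real_bound (s : seq ((Z * nat) * (Z * nat))) : uniq s ->
  (forall x, x \in s -> adj x.1 x.2) ->
  \sum_(x <- s) (2 * M * expR (- ((lvl x)%:R ^+ 2))) <= Kc.
Proof.
move=> us sadj.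
set N := (\max_(x <- s) lvl x).+1.
have hN : forall x, x \in s -> (lvl x < N)%N.
  by move=> x xs; rewrite ltnS; apply: (leq_bigmax_seq (F := lvl)).
rewrite (sum_by_level (fun m => 2 * M * expR (- (m%:R ^+ 2))) hN).
have M0 : 0 < M by apply: MT_gt0.
have C1 := Cd_ge1'.
have q1 : 1 <= cst_q by rewrite /cst_q exprn_ege1.
set K := 4 * Cd C ^+ (2 * Ka alpha + 2) * expR (ln (2 * cst_q) ^+ 2).
apply: le_trans (_ : \sum_(0 <= m < N) 2 * M * (K * 2^-1 ^+ m) <= _).
  apply: ler_sum => m _.
  have hc := count_level z0 Hm Hdiam Ha Hmax Hpos HC HAm m us sadj.
  apply: le_trans (_ : 4 * Cd C ^+ (Ka alpha * m.+1 + 1) ^+ 2 * (2 * M * expR (- (m%:R ^+ 2))) <= _).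
    by apply: ler_wpM2r => //; apply: mulr_ge0; [apply: mulr_ge0; lra|apply: expR_ge0].
  have e : Cd C ^+ (Ka alpha * m.+1 + 1) ^+ 2 = Cd C ^+ (2 * Ka alpha + 2) * cst_q ^+ m.
    by rewrite /cst_q -!exprM -exprD; congr (_ ^+ _); lia.
  rewrite e /K.
  have := quad_exp m q1.
  have h0 : 0 <= Cd C ^+ (2 * Ka alpha + 2) by apply: exprn_ge0; lra.
  move=> hq.
  have : 4 * (Cd C ^+ (2 * Ka alpha + 2) * cst_q ^+ m) * (2 * M * expR (- m%:R ^+ 2))
       = 2 * M * (4 * Cd C ^+ (2 * Ka alpha + 2)) * (cst_q ^+ m * expR (- m%:R ^+ 2)) by ring.
  move=> ->.
  have : 2 * M * (4 * Cd C ^+ (2 * Ka alpha + 2) * expR (ln (2 * cst_q) ^+ 2) * 2^-1 ^+ m)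
       = 2 * M * (4 * Cd C ^+ (2 * Ka alpha + 2)) * (expR (ln (2 * cst_q) ^+ 2) * 2^-1 ^+ m) by ring.
  move=> ->.
  apply: ler_wpM2l => //; apply: mulr_ge0; [lra|lra].
rewrite -mulr_sumr -mulr_sumr /Kc -/K.
apply: ler_wpM2l; first lra.
apply: ler_wpM2l; first by rewrite /K; apply: mulr_ge0; [apply: mulr_ge0; [lra|apply: exprn_ge0; lra]|apply: expR_ge0].
exact: geom_le.
Qed.


Lemma xn_ge_lvl v w t : adj v w -> 0 <= t <= 1 -> (lvl (v, w))%:R <= xn (v, w, t).
Proof.
move=> h /andP[t0 t1]; have [iv iw _ _ _] := h.
have dv := D_ge tau Hm Hdiam Ha HA0 Hmax iv.
have dw := D_ge tau Hm Hdiam Ha HA0 Hmax iw.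
have l1 : (lvl (v, w))%:R <= (v.2)%:R :> R by rewrite ler_nat /lvl geq_minl.
have l2 : (lvl (v, w))%:R <= (w.2)%:R :> R by rewrite ler_nat /lvl geq_minr.
rewrite /xnorm le_min; apply/andP; split; lra.
Qed.

Lemma mu_int_fin (rho : R -> R) (f : XP -> \bar R) :
  (forall v w t, adj v w -> 0 <= t <= 1 ->
     (0 <= f (v, w, t) * (rho (xn (v, w, t)))%:E)%E /\
     (f (v, w, t) * (rho (xn (v, w, t)))%:E <= (expR (- (xn (v, w, t)) ^+ 2))%:E)%E) ->
  (mu_int nu A alpha tau z0 rho f < +oo)%E.
Proof.
move=> Hf.
set I := fun vw : (Z * nat) * (Z * nat) => (\int[lebesgue_measure]_(t in unit_itv)
          (f (vw.1, vw.2, t) * (rho (xn (vw.1, vw.2, t)))%:E))%E.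
have unitP : forall t : R, unit_itv t -> 0 <= t <= 1.
  by move=> t; rewrite /unit_itv /= in_itv.
have Ib : forall vw, adj vw.1 vw.2 ->
    (0 <= I vw)%E /\ (I vw <= (expR (- ((lvl vw)%:R ^+ 2)))%:E)%E.
  move=> [v w] /= h; split.
    by apply: integral_ge0 => t /unitP ht; case: (Hf v w t h ht).
  apply: le_trans (_ : (\int[lebesgue_measure]_(t in unit_itv)
                        (cst (expR (- ((lvl (v, w))%:R ^+ 2)))%:E t) <= _)%E).
    apply: int_mono => t /unitP ht; first by case: (Hf v w t h ht).
    have [_ h2] := Hf v w t h ht; apply: le_trans h2 _.
    have l0 : 0 <= (lvl (v, w))%:R :> R by [].
    have ab := xn_ge_lvl h ht.
    rewrite /cst lee_fin ler_expR lerN2; nra.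
  rewrite integral_cst; last exact: measurable_itv.
  have L1 : (lebesgue_measure (unit_itv : set R) = 1)%E.
    by rewrite /unit_itv lebesgue_measure_itv /= lte_fin ltr01 oppr0 adde0.
  rewrite (_ : lebesgue_measure_lebesgue_measure__canonical__measure_function_Measure R unit_itv = 1%E);
    last exact: L1.
  by rewrite mule1.
have Wb : forall v w, adj v w ->
    (0 <= nu (Bv dZ alpha v) + nu (Bv dZ alpha w))%E /\
    (nu (Bv dZ alpha v) + nu (Bv dZ alpha w) <= (2 * M)%:E)%E.
  move=> v w h.
  have [e1 p1] := nu_ball Hpos v.1 (alphan_gt0 Ha v.2).
  have [e2 p2] := nu_ball Hpos w.1 (alphan_gt0 Ha w.2).
  have m1 := mb_le z0 Hm Hdiam Hpos v.1 (alphan_gt0 Ha v.2).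
  have m2 := mb_le z0 Hm Hdiam Hpos w.1 (alphan_gt0 Ha w.2).
  rewrite /Bv; move: e1 e2 => /= -> ->; rewrite -EFinD !lee_fin; split; lra.
have Tb : forall vw, adj vw.1 vw.2 ->
    ((nu (Bv dZ alpha vw.1) + nu (Bv dZ alpha vw.2)) * I vw <=
       (2 * M * expR (- ((lvl vw)%:R ^+ 2)))%:E)%E.
  move=> vw h; have [w0 w1] := Wb _ _ h; have [i0 i1] := Ib _ h.
  by rewrite EFinM; apply: lee_pmul.
have Eb : (\esum_(vw in [set vw : (Z * nat) * (Z * nat) | adj vw.1 vw.2])
   ((nu (Bv dZ alpha vw.1) + nu (Bv dZ alpha vw.2)) * I vw) <= Kc%:E)%E.
  apply: ge_ereal_sup => _ [F [finF FS] <-].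
  rewrite fsbig_finite //= big_seq.
  apply: le_trans (_ : (\sum_(vw <- finmap.enum_fset (fset_set F) | vw \in finmap.enum_fset (fset_set F))
      (2 * M * expR (- ((lvl vw)%:R ^+ 2)))%:E <= _)%E).
    apply: lee_sum => vw; rewrite in_fset_set // inE => /FS; exact: Tb.
  rewrite -big_seq sumEFin lee_fin; apply: real_bound; first exact: finmap.fset_uniq.
  by move=> x; rewrite in_fset_set // inE => /FS.
rewrite /mu_int.
apply: le_lt_trans (_ : ((2^-1)%:E * Kc%:E < +oo)%E); last by rewrite -EFinM ltry.
apply: lee_wpmul2l => //; rewrite lee_fin invr_ge0 //.
Qed.

End MuInt.


Lemma tent0 (R : realType) : tent (0 : R) = 0.
Proof. by rewrite /tent subr0 min_l // ler01. Qed.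

Lemma tent_half (R : realType) : tent (2^-1 : R) = 2^-1.
Proof. by rewrite /tent (_ : 1 - 2^-1 = 2^-1 :> R) ?minxx //; lra. Qed.

Lemma no_L (R : realType) (L : R) : `|0 - L| < 8^-1 -> `|2^-1 - L| < 8^-1 -> False.
Proof. by move=> /ltr_normlP [a1 a2] /ltr_normlP [b1 b2]; lra. Qed.

Theorem mainTheorem3 (R : realType) (Z : pointedType) (dZ : Z -> Z -> R)
  (nu : {measure set (g_sigma_algebraType (openZ dZ)) -> \bar R})
  (alpha tau : R) (z0 : Z) (A : nat -> set Z) (p : R) :
  is_metric dZ -> metric_compact dZ ->
  (0 < diamZ dZ)%E -> (diamZ dZ < 1)%E ->
  doubling nu ->
  1 < alpha -> 1 < tau ->
  A 0%N = [set z0] ->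
  (forall n : nat, (0 < n)%N -> maximal_separated dZ (alpha ^- n) (A n)) ->
  (forall n m : nat, (n < m)%N -> A n `<=` A m) ->
  1 <= p ->
  let rho := fun t : R => expR (- t ^+ 2 - eps alpha * p * t) in
  exists u : @XP R Z -> R,
    in_N1p nu A alpha tau z0 rho p u /\
    trace_tilde_exists nu A alpha u /\
    trace_tilde_is nu A alpha u 0 /\
    ~ trace_T_exists nu A alpha u.
Proof.
move=> Hm _ _ Hdiam [Hpos [C HC]] Ha _ HA0 Hmax HAm p1 rho.
have e0 : 0 < eps alpha by apply: ln_gt0.
have xn0 : forall v w t, adj dZ A alpha tau v w -> 0 <= t <= 1 ->
    0 <= xnorm dZ A alpha tau z0 (v, w, t).
  move=> v w t h ht; apply: le_trans _ (xn_ge_lvl Hm Hdiam Ha HA0 Hmax h ht).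
  by [].
have avg0 : forall xi, u_avg dZ A alpha (@uu R Z) xi = fun _ => 0.
  move=> xi; apply/funext => n; rewrite /u_avg fsbig1 ?mul0r //.
  by move=> z _; rewrite /uu /vert /= eqxx.
exists uu; split; [split|split; [|split]].
- split; first exact: lip_respects (@uu_lip _ _ dZ A alpha tau).
  split; first exact: lip_borel (@uu_lip _ _ dZ A alpha tau).
  apply: (mu_int_fin Hm Hdiam Ha HA0 Hmax Hpos HC HAm) => v w t h ht.
  have U : 0 <= `|uu (v, w, t)| <= 1.
    rewrite normr_ge0 /=; have /andP[t0 t1] := ht.
    rewrite /uu /tent /=; case: ifP => _; last by rewrite normr0.
    rewrite ger0_norm; first by rewrite ge_min t1.
    by rewrite le_min; apply/andP; split; lra.
  have /andP[u0 u1] := U.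
  have pw : 0 <= `|uu (v, w, t)| `^ p <= 1.
    rewrite powR_ge0 /=; have [->|nz] := eqVneq `|uu (v, w, t)| 0.
      by rewrite powR0 // gt_eqF //; lra.
    refine (le_trans (ge1r_powR _ p1) u1).
    by rewrite u1 andbT lt_neqAle eq_sym nz u0.
  have xp := xn0 v w t h ht.
  set x := xnorm dZ A alpha tau z0 (v, w, t) in xp *.
  have r0 : 0 <= rho x by apply: expR_ge0.
  have r1 : rho x <= expR (- x ^+ 2).
    rewrite /rho ler_expR; have : 0 <= eps alpha * p * x.
      by apply: mulr_ge0 => //; apply: mulr_ge0; lra.
    lra.
  rewrite -EFinM !lee_fin; split; first by apply: mulr_ge0; case/andP: pw.
  apply: le_trans r1; rewrite -[X in _ <= X]mul1r; apply: ler_wpM2r => //.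
  by case/andP: pw.
- exists (gg dZ A alpha tau z0); split; first exact: gg_ug.
  apply: (mu_int_fin Hm Hdiam Ha HA0 Hmax Hpos HC HAm) => v w t h ht.
  have xp := xn0 v w t h ht.
  rewrite /gg poweR_EFin -expRM -EFinM -expRD /rho.
  set x := xnorm dZ A alpha tau z0 (v, w, t).
  rewrite (_ : eps alpha * x * p + (- x ^+ 2 - eps alpha * p * x) = - x ^+ 2); last by ring.
  by rewrite !lee_fin expR_ge0 lexx.
- apply: aeW => xi; rewrite avg0; apply: cvgP (cvg_cst 0).
- apply: aeW => xi; rewrite avg0; exact: cvg_cst.
- rewrite /trace_T_exists => -[N [mN N0 sub]].
  have notQ : forall xi : Z, ~ (exists L, forall xs, is_ray dZ A alpha xi xs -> ray_limit (@uu R Z) xs L).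
    move=> xi [L HL].
    have [xs hxs] : exists xs, is_ray dZ A alpha xi xs.
      have H : forall n, exists y, An_xi dZ A alpha n xi y.
        by move=> n; have [y ay dy] := cover Hm Hdiam Ha HA0 Hmax n xi; exists y.
      by have [f hf] := choice H; exists f.
    have [K HK] := HL xs hxs (8^-1) ltac:(by []).
    have h0 := HK K (leqnn K) 0 ltac:(by rewrite lexx ler01).
    have h1 := HK K (leqnn K) (2^-1) ltac:(by apply/andP; split; lra).
    move: h0 h1; rewrite /uu /ray_point /= (_ : K != K.+1); last by lia.
    rewrite (tent0 R) (tent_half R); exact: no_L.
  have sT : (ballZ dZ z0 1 : set (g_sigma_algebraType (openZ dZ))) `<=` N.
    by move=> xi _; apply: sub => /= hq; apply: (notQ xi).
  have h : (nu (ballZ dZ z0 1) <= nu N)%E.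
    exact: (le_measure nu (mem_set (ball_meas Hm z0 1)) (mem_set mN) sT).
  rewrite N0 in h; have [hp _] := Hpos z0 1 ltr01.
  by move: (lt_le_trans hp h); rewrite ltxx.
Qed.
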